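(* Let $\Delta$ be a quasi-tree on $[n]$ of dimension $d-1$, and let $2\leq\ell\leq d-1$. For $k\ge1$ let $I_k\subset K[x_1,\ldots,x_n]$ be the ideal generated by the monomials $x_F=\prod_{i\in F}x_i$ with $F\subseteq[n]$, $|F|=k+1$, $F\notin\Delta$ (the facet ideal of $\overline{\mathrm{skel}_\Delta(k)}$). Then $I_\ell$ is generated by all squarefree monomials $u$ of degree $\ell+1$ that are divisible by some monomial generator of $I_1$.
   Context: A simplicial complex on $[n]$ is a collection of subsets of $[n]$ containing all singletons and closed under taking subsets; facets are maximal faces. A facet $F$ is a leaf if either it is the only facet, or there is a facet $G\neq F$ with $H\cap F\subseteq G\cap F$ for every facet $H\neq F$. A complex is a quasi-tree if its facets can be labeled $F_1,\ldots,F_m$ so that each $F_i$ is a leaf of the complex generated by $F_1,\ldots,F_i$. $\mathrm{skel}_\Delta(k)$ is the complex whose facets are the $k$-dimensional faces of $\Delta$, and $\bar\Gamma$ for a pure $(e-1)$-dimensional $\Gamma$ is the complex generated by the $e$-subsets of $[n]$ not in $\Gamma$. *)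

(* Defs.v *)
From HB Require Import structures.
From mathcomp Require Import all_boot all_order all_algebra.
From mathcomp Require Import mpoly.
Set Implicit Arguments. Unset Strict Implicit. Unset Printing Implicit Defensive.
Import GRing.Theory.
Local Open Scope ring_scope.

Definition is_complex (n : nat) (D : {set {set 'I_n}}) : Prop :=
  (forall i : 'I_n, [set i] \in D) /\
  (forall F G : {set 'I_n}, F \in D -> G \subset F -> G \in D).

Definition is_facet (n : nat) (D : {set {set 'I_n}}) (F : {set 'I_n}) : bool :=
  (F \in D) && [forall G in D, (F \subset G) ==> (G == F)].

Definition facets (n : nat) (D : {set {set 'I_n}}) : {set {set 'I_n}} :=
  [set F | is_facet D F].

(* dimension of D is (max face size) - 1; we record the max face size *)
Definition max_face_size (n : nat) (D : {set {set 'I_n}}) : nat :=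
  \max_(F in D) #|F|.

Definition is_leaf (n : nat) (Fs : seq {set 'I_n}) (F : {set 'I_n}) : Prop :=
  F \in Fs /\
  ((forall H, H \in Fs -> H = F) \/
   (exists G, [/\ G \in Fs, G != F &
      forall H, H \in Fs -> H != F -> H :&: F \subset G :&: F])).

(* quasi-tree: facets can be ordered F_1..F_m with F_i a leaf of the complex
   generated by F_1..F_i (whose facets are exactly F_1..F_i). *)
Definition quasi_tree (n : nat) (D : {set {set 'I_n}}) : Prop :=
  exists s : seq {set 'I_n},
    uniq s /\ (forall F, F \in s = (F \in facets D)) /\
    (forall i, (i < size s)%N -> is_leaf (take i.+1 s) (nth set0 s i)).

Definition xF (K : comNzRingType) (n : nat) (F : {set 'I_n}) : {mpoly K[n]} :=
  \prod_(i in F) 'X_i.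

Definition in_ideal (R : comNzRingType) (S : R -> Prop) (p : R) : Prop :=
  exists s : seq (R * R), (forall c, c \in s -> S c.2) /\
    p = \sum_(c <- s) c.1 * c.2.

Definition gens_I (K : comNzRingType) (n : nat) (D : {set {set 'I_n}}) (k : nat)
  (p : {mpoly K[n]}) : Prop :=
  exists F : {set 'I_n}, [/\ #|F| = k.+1, F \notin D & p = xF K F].

Definition gens_J (K : comNzRingType) (n : nat) (D : {set {set 'I_n}}) (l : nat)
  (u : {mpoly K[n]}) : Prop :=
  exists F : {set 'I_n}, [/\ #|F| = l.+1, u = xF K F &
    exists g, gens_I D 1 g /\ exists q : {mpoly K[n]}, u = q * g].

(* Main.v *)
Require Import Defs.
From HB Require Import structures.
From mathcomp Require Import all_boot all_order all_algebra.
From mathcomp Require Import mpoly.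
Set Implicit Arguments. Unset Strict Implicit. Unset Printing Implicit Defensive.
Import GRing.Theory.

Section Comb.
Variable n : nat.
Variable D : {set {set 'I_n}}.

Definition clique (Fs : seq {set 'I_n}) (S : {set 'I_n}) :=
  forall x y, x \in S -> y \in S -> exists2 H, H \in Fs & [set x; y] \subset H.

Lemma clique_take (s : seq {set 'I_n}) :
  (forall i, (i < size s)%N -> is_leaf (take i.+1 s) (nth set0 s i)) ->
  forall i, (i <= size s)%N -> forall S, S != set0 -> clique (take i s) S ->
  exists2 H, H \in take i s & S \subset H.
Proof.
move=> Hl; elim=> [|i IH] Hi S SN Sc.
  case/set0Pn: SN => x xS; case: (Sc x x xS xS) => H; by rewrite take0.
have Ht : take i.+1 s = rcons (take i s) (nth set0 s i).
  by rewrite (take_nth set0).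
rewrite Ht in Sc.
case: (Hl i Hi) => _ []; rewrite Ht.
  move=> Hal0.
  exists (nth set0 s i); first by rewrite mem_rcons mem_head.
  apply/subsetP => x xS; case: (Sc x x xS xS) => H HI Hs.
  rewrite -(Hal0 H HI); apply: (subsetP Hs).
  by rewrite !inE eqxx.
case=> G [GI GF Hsub].
have GI' : G \in take i s by move: GI; rewrite mem_rcons inE (negbTE GF).
set F := nth set0 s i in Hsub GI GF GI' *.
have [SF|] := boolP (S \subset F).
  by exists F => //; rewrite mem_rcons mem_head.
case/subsetPn => x xS xF.
have SFG : S :&: F \subset G.
  apply/subsetP => y; rewrite inE => /andP [yS yF].
  case: (Sc x y xS yS) => H HI Hxy.
  have HF : H != F.
    apply/eqP => E; move: Hxy; rewrite E => /subsetP /(_ x); rewrite !inE eqxx.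
    by move=> /(_ isT); rewrite (negbTE xF).
  have := Hsub H HI HF => /subsetP /(_ y); rewrite !inE yF andbT.
  have -> : y \in H by apply: (subsetP Hxy); rewrite !inE eqxx orbT.
  by move=> /(_ isT) /andP [].
suff [H0 HI0 SH0] : exists2 H, H \in take i s & S \subset H.
  by exists H0 => //; rewrite mem_rcons inE HI0 orbT.
apply: IH => //; first by apply: ltnW.
move=> a b aS bS; case: (Sc a b aS bS) => H HI Hab.
move: HI; rewrite mem_rcons inE => /orP [/eqP HE|HI]; last by exists H.
exists G => //; apply/subsetP => z zab.
have zS : z \in S by move: zab; rewrite !inE => /orP [/eqP ->|/eqP ->].
apply: (subsetP SFG); rewrite inE zS /=.
by move: Hab; rewrite HE => /subsetP; apply.
Qed.

Lemma face_in_facet : forall A, A \in D -> exists2 F, F \in facets D & A \subset F.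
Proof.
move=> A AD.
have P0 : A \in [pred F | (F \in D) && (A \subset F)] by rewrite inE AD subxx.
case: (arg_maxnP (fun F : {set 'I_n} => #|F|) P0) => F /andP [FD AF] Fmax.
exists F => //; rewrite inE /is_facet FD /=.
apply/forall_inP => G GD; apply/implyP => FG.
rewrite eq_sym eqEcard FG /=; apply: Fmax.
by apply/andP; split=> //; apply: subset_trans AF FG.
Qed.

Lemma flag : is_complex D -> quasi_tree D ->
  forall S, S != set0 -> (forall x y, x \in S -> y \in S -> [set x; y] \in D) -> S \in D.
Proof.
move=> [Hsg Hcl] [s [_ [Hs Hl]]] S SN Hp.
have Hc : clique (take (size s) s) S.
  move=> x y xS yS; case: (face_in_facet (Hp x y xS yS)) => F Ff Fxy.
  by exists F => //; rewrite take_size Hs.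
case: (clique_take Hl (leqnn _) SN Hc) => F; rewrite take_size Hs inE.
by case/andP => FD _ SF; apply: Hcl FD SF.
Qed.
End Comb.

Lemma in_ideal_mono (R : comNzRingType) (S1 S2 : R -> Prop) p :
  (forall g, S1 g -> S2 g) -> in_ideal S1 p -> in_ideal S2 p.
Proof. by move=> H [s [Hs ->]]; exists s; split => // c /Hs /H. Qed.

Theorem lemma4p3 (K : fieldType) (n : nat) (D : {set {set 'I_n}}) (d l : nat) :
  is_complex D -> quasi_tree D -> max_face_size D = d ->
  (2 <= l)%N -> (l <= d - 1)%N ->
  forall p : {mpoly K[n]},
    in_ideal (gens_I D l) p <-> in_ideal (gens_J D l) p.
Proof.
move=> Hc Hq _ Hl _ p; split; apply: in_ideal_mono => g.
- case=> F [Fc FD ->].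
  have : ~~ [forall x in F, forall y in F, [set x; y] \in D].
    apply: contra FD => /forall_inP H; apply: (flag Hc Hq).
      by apply/eqP => F0; move: Fc; rewrite F0 cards0.
    by move=> x y xF yF; move/forall_inP: (H x xF); apply.
  rewrite negb_forall_in => /exists_inP [x xinF].
  rewrite negb_forall_in => /exists_inP [y yinF xyD].
  exists F; split => //; exists (xF K [set x; y]); split.
    exists [set x; y]; split => //.
    rewrite cards2; case: eqP => // E; move: xyD; rewrite E setUid.
    by case: Hc => ->.
  exists (xF K (F :\: [set x; y])).
  rewrite /xF (big_setID [set x; y]) /= mulrC.
have -> // : F :&: [set x; y] = [set x; y].
  by apply/setIidPr; apply/subsetP => i; rewrite !inE => /orP [/eqP ->|/eqP ->].
- case=> F [Fc -> [g' [[G [Gc GD ->]] [q Hq']]]].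
  exists F; split => //.
  apply: contra GD => FD; case: Hc => _ Hcl; apply: Hcl FD _.
  apply/subsetP => i iG; apply/negPn/negP => iF.
  pose v := fun j : 'I_n => if j == i then (0 : K)%R else (1 : K)%R.
  have := congr1 (meval v) Hq'.
  rewrite mevalM /xF.
  rewrite !(big_morph (meval v) (mevalM v) (meval1 v)).
  rewrite (bigD1 i iG) /= mevalXU /v eqxx mul0r mulr0.
  rewrite big1; first by move/eqP; rewrite oner_eq0.
  move=> j jF.
  rewrite mevalXU; case: eqP => // E; by move: iF; rewrite -E jF.
Qed.
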